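(* For every $n\geq 1$ and every $\varepsilon>0$ there is $M$ such that for all $m\geq M$, Duplicator has a winning strategy in the game $\Gamma_{\mathrm{HS}}(\mathbb M_m,\mathbb M_{m+1},n,\varepsilon)$.
   Context: $\mathbb M_m$ denotes the algebra of complex $m\times m$ matrices with matrix multiplication, addition, scalar multiplication and adjoint $a^*$ (conjugate transpose). For a vector $\xi=(x_1,\dots,x_m)\in\mathbb C^m$, $\|\xi\|=\sqrt{\sum_i|x_i|^2}$; the operator norm of $a\in\mathbb M_m$ is $\|a\|_{\mathrm{OP}}=\sup\{\|a\xi\|:\|\xi\|=1\}$, and the normalized Hilbert--Schmidt norm of $a=(a_{ij})$ is $\|a\|_{\mathrm{HS}}=\sqrt{\frac1m\sum_{i,j=1}^m|a_{ij}|^2}$. For $l,m,n\geq 1$ and $\varepsilon>0$, the game $\Gamma_{\mathrm{HS}}(\mathbb M_l,\mathbb M_m,n,\varepsilon)$ between Challenger and Duplicator lasts $n$ innings: in each inning Challenger chooses a matrix $x$ with $\|x\|_{\mathrm{OP}}\leq 1$ in one of $\mathbb M_l$, $\mathbb M_m$, and Duplicator responds with a matrix $x$ with $\|x\|_{\mathrm{OP}}\leq 1$ in the other algebra; thus in inning $j$ matrices $a_j\in\mathbb M_l$ and $b_j\in\mathbb M_m$ are determined (repetitions are allowed). After $n$ innings Duplicator wins iff for all $i,j,k\leq n$ and all complex numbers $y,z$ with $\max(|y|,|z|)\leq 1$, each of the quantities $\big|\|a_i\|_{\mathrm{HS}}-\|b_i\|_{\mathrm{HS}}\big|$, $\big|\|a_ia_j-a_k\|_{\mathrm{HS}}-\|b_ib_j-b_k\|_{\mathrm{HS}}\big|$,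 $\big|\|ya_i+za_j-a_k\|_{\mathrm{HS}}-\|yb_i+zb_j-b_k\|_{\mathrm{HS}}\big|$ and $\big|\|a_i^*-a_j\|_{\mathrm{HS}}-\|b_i^*-b_j\|_{\mathrm{HS}}\big|$ is at most $\varepsilon$; otherwise Challenger wins. A winning strategy for a player is a rule specifying that player's moves as a function of previous moves such that the player wins regardless of the opponent's play. *)

(* Defs.v *)
From mathcomp Require Import all_boot all_order all_algebra reals.
From mathcomp.real_closed Require Import complex.
Set Implicit Arguments. Unset Strict Implicit. Unset Printing Implicit Defensive.
Import Order.TTheory GRing.Theory Num.Theory.
Local Open Scope ring_scope.

Section HSGame.
Variable R : realType.
Local Notation C := (R[i]).

Definition cabs (z : C) : R := Normc.normc z.

Definition vnorm (m : nat) (xi : 'cV[C]_m) : R :=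
  Num.sqrt (\sum_(i < m) cabs (xi i 0) ^+ 2).

(* ||a||_OP <= 1, i.e. sup{||a xi|| : ||xi|| = 1} <= 1 *)
Definition contraction (m : nat) (a : 'M[C]_m) : Prop :=
  forall xi : 'cV[C]_m, vnorm xi = 1 -> vnorm (a *m xi) <= 1.

Definition hsnorm (m : nat) (a : 'M[C]_m) : R :=
  Num.sqrt ((m%:R)^-1 * \sum_(i < m) \sum_(j < m) cabs (a i j) ^+ 2).

Definition adj (m : nat) (a : 'M[C]_m) : 'M[C]_m :=
  \matrix_(i, j) conjc (a j i).

Definition dup_wins_pos (l m n : nat) (eps : R)
    (a : nat -> 'M[C]_l) (b : nat -> 'M[C]_m) : Prop :=
  forall i j k : nat, (i < n)%N -> (j < n)%N -> (k < n)%N ->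
  forall y z : C, Num.max (cabs y) (cabs z) <= 1 ->
    [/\ `| hsnorm (a i) - hsnorm (b i) | <= eps,
        `| hsnorm (a i * a j - a k) - hsnorm (b i * b j - b k) | <= eps,
        `| hsnorm (y *: a i + z *: a j - a k)
           - hsnorm (y *: b i + z *: b j - b k) | <= eps
      & `| hsnorm (adj (a i) - a j) - hsnorm (adj (b i) - b j) | <= eps].

(* A Duplicator strategy: given the history of previous innings (list of
   pairs (a_j, b_j)) and Challenger's current move (a matrix in M_l, tagged
   inl, or in M_m, tagged inr), the response in the other algebra. *)
Record dup_strategy (l m : nat) := DupStrategy {
  respL : seq ('M[C]_l * 'M[C]_m) -> 'M[C]_l -> 'M[C]_m;
  respR : seq ('M[C]_l * 'M[C]_m) -> 'M[C]_m -> 'M[C]_l }.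

Definition legal_strategy (l m : nat) (s : dup_strategy l m) : Prop :=
  (forall h x, contraction x -> contraction (respL s h x)) /\
  (forall h x, contraction x -> contraction (respR s h x)).

Definition chal_move_legal (l m : nat) (c : 'M[C]_l + 'M[C]_m) : Prop :=
  match c with inl x => contraction x | inr x => contraction x end.

Definition inning (l m : nat) (s : dup_strategy l m)
    (h : seq ('M[C]_l * 'M[C]_m)) (c : 'M[C]_l + 'M[C]_m) :
    seq ('M[C]_l * 'M[C]_m) :=
  match c with
  | inl x => rcons h (x, respL s h x)
  | inr x => rcons h (respR s h x, x)
  end.

Definition play (l m : nat) (s : dup_strategy l m)
    (cs : seq ('M[C]_l + 'M[C]_m)) : seq ('M[C]_l * 'M[C]_m) :=
  foldl (inning s) [::] cs.

(* Since Duplicator's strategy is deterministic, quantifying over all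
   sequences of legal Challenger moves covers all Challenger strategies. *)
Definition dup_has_winning_strategy (l m n : nat) (eps : R) : Prop :=
  exists s : dup_strategy l m, legal_strategy s /\
    forall cs : seq ('M[C]_l + 'M[C]_m),
      size cs = n -> (forall c, c \in cs -> chal_move_legal c) ->
      let h := play s cs in
      dup_wins_pos n eps (fun i => (nth (0, 0) h i).1)
                         (fun i => (nth (0, 0) h i).2).

End HSGame.

(* Main.v *)
Require Import Defs.
From mathcomp Require Import all_boot all_order all_algebra reals.
From mathcomp.real_closed Require Import complex.
From mathcomp Require Import ring lra.
Import Order.TTheory GRing.Theory Num.Theory.
Local Open Scope ring_scope.
Set Implicit Arguments. Unset Strict Implicit. Unset Printing Implicit Defensive.

Section Proof.
Variable R : realType.
Local Notation C := (R[i]).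

Definition n2 (z : C) : R := let: Complex a b := z in a ^+ 2 + b ^+ 2.

Lemma cabs2 (z : C) : cabs z ^+ 2 = n2 z.
Proof. case: z => a b; rewrite /cabs /n2 /= sqr_sqrtr // addr_ge0 ?sqr_ge0 //. Qed.

Lemma n2_ge0 z : 0 <= n2 z.
Proof. by case: z => a b; rewrite /n2 addr_ge0 ?sqr_ge0. Qed.

Lemma n2M z w : n2 (z * w) = n2 z * n2 w.
Proof. case: z => a b; case: w => c d; rewrite /n2 /=. ring. Qed.

Lemma n2N z : n2 (- z) = n2 z.
Proof. case: z => a b; rewrite /n2 /=. ring. Qed.

Lemma n2D z w : n2 (z + w) <= 2 * (n2 z + n2 w).
Proof. case: z => a b; case: w => c d; rewrite /n2 /=.
have := sqr_ge0 (a - c); have := sqr_ge0 (b - d). nra. Qed.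

Lemma n2B z w : n2 (z - w) <= 2 * (n2 z + n2 w).
Proof. by rewrite -(n2N w) n2D. Qed.

Lemma n2D3 z w u : n2 (z + w + u) <= 3 * (n2 z + n2 w + n2 u).
Proof. case: z => a b; case: w => c d; case: u => e f; rewrite /n2 /=.
have := sqr_ge0 (a - c); have := sqr_ge0 (b - d); have := sqr_ge0 (a - e); have := sqr_ge0 (b - f);
have := sqr_ge0 (c - e); have := sqr_ge0 (d - f). nra. Qed.

Lemma n2J z : n2 (conjc z) = n2 z.
Proof. case: z => a b; rewrite /n2 /=. ring. Qed.

Lemma n2_real (r : R) : n2 (r%:C)%C = r ^+ 2.
Proof. rewrite /n2 /=. ring. Qed.


Definition sq k (v : 'cV[C]_k) : R := \sum_i n2 (v i 0).

Lemma sq_ge0 k (v : 'cV[C]_k) : 0 <= sq v.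
Proof. by rewrite /sq sumr_ge0 // => i _; apply: n2_ge0. Qed.

Lemma vnormE k (v : 'cV[C]_k) : vnorm v = Num.sqrt (sq v).
Proof. by rewrite /vnorm /sq; congr Num.sqrt; apply: eq_bigr => i _; rewrite cabs2. Qed.

Lemma n2_eq0 z : n2 z = 0 -> z = 0.
Proof.
case: z => a b /= h.
have ha : a ^+ 2 = 0 by apply/eqP; rewrite eq_le sqr_ge0 andbT; rewrite -h lerDl sqr_ge0.
have hb : b ^+ 2 = 0 by move: h; rewrite ha add0r.
by move/eqP: ha; rewrite sqrf_eq0 => /eqP ->; move/eqP: hb; rewrite sqrf_eq0 => /eqP ->.
Qed.

Lemma sqZ k (c : C) (v : 'cV[C]_k) : sq (c *: v) = n2 c * sq v.
Proof. by rewrite /sq mulr_sumr; apply: eq_bigr => i _; rewrite mxE n2M. Qed.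

Lemma contrE k (a : 'M[C]_k) : contraction a -> forall v, sq v = 1 -> sq (a *m v) <= 1.
Proof.
move=> ha v hv; have := ha v; rewrite !vnormE hv sqrtr1 => /(_ erefl).
by rewrite -{1}sqrtr1 ler_sqrt.
Qed.

Lemma contrI k (a : 'M[C]_k) : (forall v, sq v = 1 -> sq (a *m v) <= 1) -> contraction a.
Proof.
move=> ha v; rewrite !vnormE => hv.
have e : sq v = 1.
  by rewrite -(sqr_sqrtr (sq_ge0 v)) hv expr1n.
by rewrite -sqrtr1 ler_sqrt //; apply: ha.
Qed.

Lemma contr_le k (a : 'M[C]_k) : contraction a -> forall v, sq (a *m v) <= sq v.
Proof.
move=> /contrE ha v.
have [s0|spos] := eqVneq (sq v) 0.
  have v0 : v = 0.
    apply/matrixP => i j; rewrite ord1 mxE; apply: n2_eq0.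
    by move/eqP: s0; rewrite psumr_eq0 => [/allP/(_ i (mem_index_enum _))/implyP/(_ isT)/eqP|i0 _]; [|apply: n2_ge0].
  by rewrite v0 mulmx0.
have sp : 0 < sq v by rewrite lt_def spos sq_ge0.
set c := ((Num.sqrt (sq v))^-1)%:C%C.
have nc : n2 c = (sq v)^-1 by rewrite /c n2_real exprVn sqr_sqrtr // ltW.
have := ha (c *: v); rewrite sqZ nc mulVf // => /(_ erefl).
rewrite -scalemxAr sqZ nc.
by rewrite ler_pdivrMl // mulr1.
Qed.


Definition ReC (z : C) : R := let: Complex a _ := z in a.

Lemma ReC_sum k (F : 'I_k -> C) : ReC (\sum_i F i) = \sum_i ReC (F i).
Proof.
apply: (big_morph ReC) => [[a b] [c d]|] //=.
Qed.

Lemma n2C z : ((n2 z)%:C)%C = z * conjc z.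
Proof. case: z => a b; rewrite /n2 /=; congr Complex; ring. Qed.

Lemma ReC_real r : ReC ((r%:C)%C) = r. Proof. by []. Qed.

Lemma ReM_le z w : 2 * ReC (z * w) <= n2 z + n2 w.
Proof. case: z => a b; case: w => c d; rewrite /n2 /=.
have := sqr_ge0 (a - c); have := sqr_ge0 (b + d). nra. Qed.

Lemma contrT_le k (a : 'M[C]_k) : contraction a -> forall u, sq (a^T *m u) <= sq u.
Proof.
move=> ha u.
set w := a^T *m u.
set v := map_mx conjc w.
have sv : sq v = sq w by apply: eq_bigr => i _; rewrite mxE n2J.
have hx := contr_le ha v; rewrite sv in hx.
set x := a *m v in hx.
have key : ((sq w)%:C)%C = \sum_p u p 0 * x p 0.
  rewrite /sq.
  rewrite (big_morph (fun r : R => (r%:C)%C) (id1 := 0) (op1 := +%R)) //; last first.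
    by move=> r s; rewrite /= /real_complex_def; congr Complex; rewrite addr0.
  under eq_bigr => q _ do rewrite n2C {1}/w mxE mulr_suml.
  rewrite exchange_big /=; apply: eq_bigr => p _.
  rewrite /x mxE mulr_sumr; apply: eq_bigr => q _.
  by rewrite /v !mxE !mulrA [a p q * _]mulrC.
have : 2 * sq w <= sq u + sq x.
  rewrite -[sq w](ReC_real) key ReC_sum mulr_sumr /sq -big_split /=.
  by apply: ler_sum => p _; apply: ReM_le.
move: hx; set W := sq w; set X := sq x; set U := sq u => h1 h2. lra.
Qed.


Lemma arith (N x y b d c K : R) : 1 <= N -> 0 <= y -> y <= (N+1)*K -> 0 <= b -> b <= 2*K ->
  0 <= d -> 0 <= c -> `|x - y| <= d * y + c ->
  `|x / N - (y + b) / (N + 1)| <= 2 * d * K + (c + 3 * K) / N.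
Proof.
move=> N1 y0 yK b0 bK d0 c0 /ler_normlP [h1 h2].
have Np : 0 < N by lra.
have N1p : 0 < N + 1 by lra.
have -> : x / N - (y + b) / (N + 1) = ((x - y) * (N + 1) + y - b * N) / (N * (N + 1)).
  by field; apply/andP; split; rewrite gt_eqF.
have -> : 2 * d * K + (c + 3 * K) / N = (2 * d * K * (N * (N+1)) + (c + 3 * K) * (N + 1)) / (N * (N + 1)).
  by field; apply/andP; split; rewrite gt_eqF.
have NN : 0 < N * (N + 1) by rewrite mulr_gt0.
have NNi : 0 < (N * (N + 1))^-1 by rewrite invr_gt0.
rewrite normrM (gtr0_norm NNi).
rewrite ler_pM2r ?invr_gt0 //.
have K0 : 0 <= K by lra.
have e1 : d * y * (N + 1) <= 2 * d * K * (N * (N + 1)).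
  have : d * y <= d * ((N + 1) * K) by rewrite ler_wpM2l.
  have : d * ((N + 1) * K) <= d * (2 * N * K) by rewrite ler_wpM2l // ler_wpM2r //; lra.
  move=> h3 h4; have h5 : d * y <= d * (2 * N * K) by lra.
  have := ler_wpM2r (ltW N1p) h5. move=> h6. 
  have -> : 2 * d * K * (N * (N + 1)) = d * (2 * N * K) * (N + 1) by ring.
  exact: h6.
have e2 : `|x - y| * (N + 1) <= (d * y + c) * (N + 1) by rewrite ler_wpM2r //; [lra | apply/ler_normlP; split; lra].
have e3 : b * N <= 2 * K * (N + 1) by nra.
rewrite -[(x - y) * _]/((x - y) * (N + 1)).
have e4 : `|(x - y) * (N + 1)| <= (d * y + c) * (N + 1) by rewrite normrM (gtr0_norm N1p).
move: e4 => /ler_normlP [e5 e6].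
apply/ler_normlP; split; nra.
Qed.

Lemma sqrt_diff (x y e : R) : 0 <= x -> 0 <= y -> 0 <= e -> `|x - y| <= e ^+ 2 ->
  `|Num.sqrt x - Num.sqrt y| <= e.
Proof.
move=> x0 y0 e0 h.
have hx := sqr_sqrtr x0; have hy := sqr_sqrtr y0.
rewrite -hx -hy in h.
have := sqrtr_ge0 x; have := sqrtr_ge0 y.
move: h.
set a := Num.sqrt x; set b := Num.sqrt y => /ler_normlP [h1 h2] b0 a0.
have key : forall u v : R, 0 <= u -> 0 <= v -> u ^+ 2 - v ^+ 2 <= e ^+ 2 -> u - v <= e.
  move=> u v u0 v0 h; case: (lerP (u - v) e) => // hlt.
  have p1 : 0 < u - v - e by lra.
  have p2 : 0 < u - v + e by lra.
  have p3 : 0 <= v * (u - v) by apply: mulr_ge0 => //; lra.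
  have := mulr_gt0 p1 p2. nra.
apply/ler_normlP; split.
  have := key b a b0 a0 (ltac:(lra)); lra.
exact: key.
Qed.

Definition wd m (p : 'I_m) : 'I_m.+1 := widen_ord (leqnSn m) p.
Definition phi m (Y : 'M[C]_m.+1) : 'M[C]_m := \matrix_(p, q) Y (wd p) (wd q).
Definition psi m (X : 'M[C]_m) : 'M[C]_m.+1 :=
  \matrix_(i, j) match unlift ord_max i, unlift ord_max j with
                 | Some p, Some q => X p q | _, _ => 0 end.
Definition S m (X : 'M[C]_m) : R := \sum_i \sum_j n2 (X i j).
Definition colsum m (X : 'M[C]_m) q : R := \sum_p n2 (X p q).
Definition rowsum m (X : 'M[C]_m) p : R := \sum_q n2 (X p q).

Lemma unlift_wd m (p : 'I_m) : unlift ord_max (wd p) = Some p.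
Proof.
have -> : wd p = lift ord_max p by apply: val_inj => /=; rewrite /bump leqNgt ltn_ord.
by rewrite liftK.
Qed.

Lemma unlift_max m : unlift (@ord_max m) ord_max = None.
Proof. by rewrite unlift_none. Qed.

Lemma phi_psi m (X : 'M[C]_m) : phi (psi X) = X.
Proof. by apply/matrixP => p q; rewrite !mxE !unlift_wd. Qed.

Lemma S_ge0 m (X : 'M[C]_m) : 0 <= S X.
Proof. by apply: sumr_ge0 => i _; apply: sumr_ge0 => j _; apply: n2_ge0. Qed.

Lemma hsnormE m (X : 'M[C]_m) : hsnorm X = Num.sqrt (m%:R^-1 * S X).
Proof.
rewrite /hsnorm /S; congr (Num.sqrt (_ * _)); apply: eq_bigr => i _; apply: eq_bigr => j _.
by rewrite cabs2.
Qed.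

Lemma S_split m (Y : 'M[C]_m.+1) :
  S Y = S (phi Y) + ((\sum_i n2 (Y (wd i) ord_max)) + rowsum Y ord_max).
Proof.
rewrite /S big_ord_recr /=.
under eq_bigr => i _ do rewrite big_ord_recr /=.
rewrite big_split /= addrA; congr (_ + _ + _).
by apply: eq_bigr => i _; apply: eq_bigr => j _; rewrite mxE.
Qed.

Lemma S_cols m (Y : 'M[C]_m) : S Y = \sum_q colsum Y q.
Proof. by rewrite /S exchange_big. Qed.

Lemma core m (X : 'M[C]_m) (Y : 'M[C]_m.+1) K d c e :
  (0 < m)%N -> 0 <= K -> 0 <= d -> 0 <= c -> 0 <= e ->
  (forall q, colsum Y q <= K) -> (forall p, rowsum Y p <= K) ->
  `|S X - S (phi Y)| <= d * S (phi Y) + c ->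
  2 * d * K + (c + 3 * K) / m%:R <= e ^+ 2 ->
  `|hsnorm X - hsnorm Y| <= e.
Proof.
move=> m0 K0 d0 c0 e0 hc hr hX he.
rewrite !hsnormE; apply: sqrt_diff => //.
- by rewrite mulr_ge0 ?invr_ge0 ?ler0n ?S_ge0.
- by rewrite mulr_ge0 ?invr_ge0 ?ler0n ?S_ge0.
apply: le_trans he.
set b := (\sum_i n2 (Y (wd i) ord_max)) + rowsum Y ord_max.
have SYK : S Y <= (m.+1)%:R * K.
  rewrite S_cols; apply: le_trans (ler_sum _ (fun q _ => hc q)) _.
  by rewrite sumr_const card_ord mulr_natl.
have b0 : 0 <= b by rewrite addr_ge0 // sumr_ge0 // => i _; apply: n2_ge0.
have bK : b <= 2 * K.
  have h1 : \sum_i n2 (Y (wd i) ord_max) <= colsum Y ord_max.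
    by rewrite /colsum big_ord_recr /= lerDl n2_ge0.
  have := hc ord_max; have := hr ord_max; rewrite /b; lra.
have ySY : S (phi Y) <= (m%:R + 1) * K.
  by rewrite natr1; apply: le_trans SYK; rewrite (S_split Y) lerDl.
rewrite (S_split Y) -/b -natr1 !(mulrC _^-1).
apply: arith => //; [by rewrite ler1n | by apply: S_ge0].
Qed.


Lemma sq_delta k (q : 'I_k) : sq (delta_mx q 0 : 'cV[C]_k) = 1.
Proof.
rewrite /sq (bigD1 q) //= big1 => [|i iq]; rewrite mxE.
  by rewrite !eqxx /n2 /= expr1n expr0n /= !addr0.
by rewrite (negbTE iq) /n2 /= expr0n /= addr0.
Qed.

Lemma colsumE k (b : 'M[C]_k) q : colsum b q = sq (b *m delta_mx q 0).
Proof. by rewrite -colE /colsum /sq; apply: eq_bigr => p _; rewrite mxE. Qed.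

Lemma rowsumE k (b : 'M[C]_k) p : rowsum b p = sq (b^T *m delta_mx p 0).
Proof. by rewrite -colE /rowsum /sq; apply: eq_bigr => q _; rewrite !mxE. Qed.

Lemma colsum_le k (b : 'M[C]_k) q : contraction b -> colsum b q <= 1.
Proof. by move=> hb; rewrite colsumE -(sq_delta q); apply: contr_le. Qed.

Lemma rowsum_le k (b : 'M[C]_k) p : contraction b -> rowsum b p <= 1.
Proof. by move=> hb; rewrite rowsumE -(sq_delta p); apply: contrT_le. Qed.

Lemma colsum_mul k (b1 b2 : 'M[C]_k) q : contraction b1 -> contraction b2 ->
  colsum (b1 *m b2) q <= 1.
Proof.
move=> h1 h2; rewrite colsumE -mulmxA; apply: le_trans (contr_le h1 _) _.
by rewrite -colsumE; apply: colsum_le.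
Qed.

Lemma rowsum_mul k (b1 b2 : 'M[C]_k) p : contraction b1 -> contraction b2 ->
  rowsum (b1 *m b2) p <= 1.
Proof.
move=> h1 h2; rewrite rowsumE trmx_mul -mulmxA; apply: le_trans (contrT_le h2 _) _.
by rewrite -rowsumE; apply: rowsum_le.
Qed.

Lemma sq_split m (v : 'cV[C]_m.+1) : sq v = \sum_(p < m) n2 (v (wd p) 0) + n2 (v ord_max 0).
Proof. by rewrite /sq big_ord_recr. Qed.

Lemma psi_contr m (X : 'M[C]_m) : contraction X -> contraction (psi X).
Proof.
move=> hX; apply: contrI => v hv.
set v' : 'cV[C]_m := \col_p v (wd p) 0.
have sv' : sq v' <= sq v.
  have -> : sq v' = \sum_(p < m) n2 (v (wd p) 0) by apply: eq_bigr => p _; rewrite mxE.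
  by rewrite sq_split lerDl n2_ge0.
have e : forall p, (psi X *m v) (wd p) 0 = (X *m v') p 0.
  move=> p; rewrite !mxE big_ord_recr /= !mxE unlift_wd unlift_max mul0r addr0.
  by apply: eq_bigr => r _; rewrite !mxE !unlift_wd.
have e2 : (psi X *m v) ord_max 0 = 0.
  by rewrite mxE big1 // => r _; rewrite mxE unlift_max mul0r.
rewrite sq_split e2 /n2 /= expr0n /= addr0 addr0.
have := contr_le hX v'; rewrite hv in sv' => h.
apply: le_trans sv'; apply: le_trans h.
by rewrite le_eqVlt; apply/orP; left; apply/eqP; apply: eq_bigr => p _; rewrite e.
Qed.

Lemma phi_contr m (Y : 'M[C]_m.+1) : contraction Y -> contraction (phi Y).
Proof.
move=> hY; apply: contrI => v hv.
set v'' : 'cV[C]_m.+1 := \col_i match unlift ord_max i with Some p => v p 0 | None => 0 end.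
have sv : sq v'' = sq v.
  rewrite sq_split !mxE unlift_max /n2 /= expr0n /= addr0 addr0.
  by apply: eq_bigr => p _; rewrite !mxE unlift_wd.
have e : forall p, (phi Y *m v) p 0 = (Y *m v'') (wd p) 0.
  move=> p; rewrite !mxE big_ord_recr /= !mxE unlift_max mulr0 addr0.
  by apply: eq_bigr => r _; rewrite !mxE unlift_wd.
have := contr_le hY v''; rewrite sv hv sq_split => h.
apply: le_trans h; rewrite /sq.
have -> : \sum_i n2 ((phi Y *m v) i 0) = \sum_(p < m) n2 ((Y *m v'') (wd p) 0).
  by apply: eq_bigr => p _; rewrite e.
by rewrite lerDl n2_ge0.
Qed.


Lemma n2_entry_diff (y e : C) (d : R) : 0 < d ->
  `|n2 (y - e) - n2 y| <= d * n2 y + (1 + d^-1) * n2 e.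
Proof.
move=> d0; have dr : d * d^-1 = 1 by rewrite mulfV // gt_eqF.
have r0 : 0 < d^-1 by rewrite invr_gt0.
move: dr r0; set r := d^-1 => dr r0.
case: y => a b; case: e => c f; rewrite /n2 /=.
have h1 := mulr_ge0 (ltW d0) (sqr_ge0 (a + r * c)).
have h2 := mulr_ge0 (ltW d0) (sqr_ge0 (b + r * f)).
have h3 := mulr_ge0 (ltW d0) (sqr_ge0 (a - r * c)).
have h4 := mulr_ge0 (ltW d0) (sqr_ge0 (b - r * f)).
have e1 : d * (a + r * c) ^+ 2 = d * a ^+ 2 + 2 * a * c * (d * r) + r * c ^+ 2 * (d * r) by ring.
have e2 : d * (b + r * f) ^+ 2 = d * b ^+ 2 + 2 * b * f * (d * r) + r * f ^+ 2 * (d * r) by ring.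
have e3 : d * (a - r * c) ^+ 2 = d * a ^+ 2 - 2 * a * c * (d * r) + r * c ^+ 2 * (d * r) by ring.
have e4 : d * (b - r * f) ^+ 2 = d * b ^+ 2 - 2 * b * f * (d * r) + r * f ^+ 2 * (d * r) by ring.
rewrite dr !mulr1 in e1 e2 e3 e4.
have c2 := sqr_ge0 c; have f2 := sqr_ge0 f.
apply/ler_normlP; split; nra.
Qed.


Lemma S_diff m (Z E : 'M[C]_m) (d : R) : 0 < d ->
  `|S (Z - E) - S Z| <= d * S Z + (1 + d^-1) * S E.
Proof.
move=> d0; rewrite /S -sumrB; apply: le_trans (ler_norm_sum _ _ _) _.
rewrite !mulr_sumr -big_split /=; apply: ler_sum => i _.
rewrite -sumrB; apply: le_trans (ler_norm_sum _ _ _) _.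
rewrite !mulr_sumr -big_split /=; apply: ler_sum => j _.
by rewrite !mxE; apply: n2_entry_diff.
Qed.

Lemma sum2 k (f g h : 'I_k -> R) : (forall i, f i <= 2 * (g i + h i)) ->
  \sum_i g i <= 1 -> \sum_i h i <= 1 -> \sum_i f i <= 9.
Proof.
move=> hf hg hh; apply: le_trans (ler_sum _ (fun i _ => hf i)) _.
rewrite -mulr_sumr big_split /=; lra.
Qed.

Lemma sum3 k (f g h l : 'I_k -> R) : (forall i, f i <= 3 * (g i + h i + l i)) ->
  \sum_i g i <= 1 -> \sum_i h i <= 1 -> \sum_i l i <= 1 -> \sum_i f i <= 9.
Proof.
move=> hf hg hh hl; apply: le_trans (ler_sum _ (fun i _ => hf i)) _.
rewrite -mulr_sumr !big_split /=; lra.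
Qed.

Lemma cabs_ge0 (z : C) : 0 <= cabs z.
Proof. by case: z => a b; rewrite /cabs /= sqrtr_ge0. Qed.

Lemma n2_le1 (z : C) : cabs z <= 1 -> n2 z <= 1.
Proof. move=> h; rewrite -cabs2; have := cabs_ge0 z; nra. Qed.

Lemma n2Ml z w : n2 z <= 1 -> n2 (z * w) <= n2 w.
Proof. by move=> h; rewrite n2M ler_piMl // n2_ge0. Qed.

Definition K9 : R := 9.

Lemma case1 m (Y : 'M[C]_m.+1) : contraction Y ->
  (forall q, colsum Y q <= K9) /\ (forall p, rowsum Y p <= K9).
Proof.
move=> hY; split => [q|p].
  by apply: le_trans (colsum_le q hY) _; rewrite /K9; lra.
by apply: le_trans (rowsum_le p hY) _; rewrite /K9; lra.
Qed.

Lemma case2 m (Y1 Y2 Y3 : 'M[C]_m.+1) : contraction Y1 -> contraction Y2 -> contraction Y3 ->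
  (forall q, colsum (Y1 * Y2 - Y3) q <= K9) /\ (forall p, rowsum (Y1 * Y2 - Y3) p <= K9).
Proof.
move=> h1 h2 h3; split => [q|p].
  apply: (sum2 (g := fun p => n2 ((Y1 *m Y2) p q)) (h := fun p => n2 (Y3 p q))).
  - by move=> p; rewrite !mxE; apply: n2B.
  - exact: colsum_mul.
  - exact: colsum_le.
apply: (sum2 (g := fun q => n2 ((Y1 *m Y2) p q)) (h := fun q => n2 (Y3 p q))).
- by move=> q; rewrite !mxE; apply: n2B.
- exact: rowsum_mul.
- exact: rowsum_le.
Qed.

Lemma case3 m (Y1 Y2 Y3 : 'M[C]_m.+1) (y z : C) : contraction Y1 -> contraction Y2 -> contraction Y3 ->
  n2 y <= 1 -> n2 z <= 1 ->
  (forall q, colsum (y *: Y1 + z *: Y2 - Y3) q <= K9) /\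
  (forall p, rowsum (y *: Y1 + z *: Y2 - Y3) p <= K9).
Proof.
move=> h1 h2 h3 hy hz; split => [q|p].
  apply: (sum3 (g := fun p => n2 (Y1 p q)) (h := fun p => n2 (Y2 p q)) (l := fun p => n2 (Y3 p q))).
  - move=> p; rewrite !mxE; apply: le_trans (n2D3 _ _ _) _.
    by rewrite n2N ler_wpM2l // lerD2r lerD ?n2Ml.
  - exact: colsum_le.
  - exact: colsum_le.
  - exact: colsum_le.
apply: (sum3 (g := fun q => n2 (Y1 p q)) (h := fun q => n2 (Y2 p q)) (l := fun q => n2 (Y3 p q))).
- move=> q; rewrite !mxE; apply: le_trans (n2D3 _ _ _) _.
  by rewrite n2N ler_wpM2l // lerD2r lerD ?n2Ml.
- exact: rowsum_le.
- exact: rowsum_le.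
- exact: rowsum_le.
Qed.

Lemma case4 m (Y1 Y2 : 'M[C]_m.+1) : contraction Y1 -> contraction Y2 ->
  (forall q, colsum (adj Y1 - Y2) q <= K9) /\ (forall p, rowsum (adj Y1 - Y2) p <= K9).
Proof.
move=> h1 h2; split => [q|p].
  apply: (sum2 (g := fun p => n2 (Y1 q p)) (h := fun p => n2 (Y2 p q))).
  - by move=> p; rewrite !mxE; apply: le_trans (n2B _ _) _; rewrite n2J.
  - exact: rowsum_le.
  - exact: colsum_le.
apply: (sum2 (g := fun q => n2 (Y1 q p)) (h := fun q => n2 (Y2 p q))).
- by move=> q; rewrite !mxE; apply: le_trans (n2B _ _) _; rewrite n2J.
- exact: colsum_le.
- exact: rowsum_le.
Qed.


Lemma phi_lin m (Y1 Y2 Y3 : 'M[C]_m.+1) (y z : C) :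
  phi (y *: Y1 + z *: Y2 - Y3) = y *: phi Y1 + z *: phi Y2 - phi Y3.
Proof. by apply/matrixP => p q; rewrite !mxE. Qed.

Lemma phi_adj m (Y1 Y2 : 'M[C]_m.+1) : phi (adj Y1 - Y2) = adj (phi Y1) - phi Y2.
Proof. by apply/matrixP => p q; rewrite !mxE. Qed.

Definition Emx m (Y1 Y2 : 'M[C]_m.+1) : 'M[C]_m :=
  \matrix_(p, q) (Y1 (wd p) ord_max * Y2 ord_max (wd q)).

Lemma phi_mul m (Y1 Y2 Y3 : 'M[C]_m.+1) :
  phi Y1 * phi Y2 - phi Y3 = phi (Y1 * Y2 - Y3) - Emx Y1 Y2.
Proof.
have -> : phi Y1 * phi Y2 = phi Y1 *m phi Y2 by [].
have -> : Y1 * Y2 = Y1 *m Y2 by [].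
apply/matrixP => p q; rewrite !mxE big_ord_recr /=.
have -> : \sum_(j < m) phi Y1 p j * phi Y2 j q =
          \sum_(i < m) Y1 (wd p) (widen_ord (leqnSn m) i) * Y2 (widen_ord (leqnSn m) i) (wd q).
  by apply: eq_bigr => i _; rewrite !mxE.
by rewrite addrAC addrK.
Qed.

Lemma SE_le m (Y1 Y2 : 'M[C]_m.+1) : contraction Y1 -> contraction Y2 -> S (Emx Y1 Y2) <= 1.
Proof.
move=> h1 h2.
have -> : S (Emx Y1 Y2) = (\sum_p n2 (Y1 (wd p) ord_max)) * (\sum_q n2 (Y2 ord_max (wd q))).
  rewrite /S mulr_suml; apply: eq_bigr => p _; rewrite mulr_sumr; apply: eq_bigr => q _.
  by rewrite mxE n2M.
have a1 : \sum_(p < m) n2 (Y1 (wd p) ord_max) <= 1.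
  apply: le_trans (colsum_le ord_max h1); rewrite /colsum big_ord_recr /= lerDl n2_ge0 //.
have a2 : \sum_(q < m) n2 (Y2 ord_max (wd q)) <= 1.
  apply: le_trans (rowsum_le ord_max h2); rewrite /rowsum big_ord_recr /= lerDl n2_ge0 //.
have a3 : 0 <= \sum_(p < m) n2 (Y1 (wd p) ord_max) by apply: sumr_ge0 => p _; apply: n2_ge0.
have a4 : 0 <= \sum_(q < m) n2 (Y2 ord_max (wd q)) by apply: sumr_ge0 => p _; apply: n2_ge0.
nra.
Qed.

Lemma all4 m (b1 b2 b3 : 'M[C]_m.+1) (y z : C) (e d : R) :
  (0 < m)%N -> contraction b1 -> contraction b2 -> contraction b3 ->
  n2 y <= 1 -> n2 z <= 1 -> 0 < d -> 0 <= e ->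
  2 * d * K9 + ((1 + d^-1) + 3 * K9) / m%:R <= e ^+ 2 ->
  [/\ `| hsnorm (phi b1) - hsnorm b1 | <= e,
      `| hsnorm (phi b1 * phi b2 - phi b3) - hsnorm (b1 * b2 - b3) | <= e,
      `| hsnorm (y *: phi b1 + z *: phi b2 - phi b3)
           - hsnorm (y *: b1 + z *: b2 - b3) | <= e
    & `| hsnorm (adj (phi b1) - phi b2) - hsnorm (adj b1 - b2) | <= e].
Proof.
move=> m0 h1 h2 h3 hy hz d0 e0 he.
have K0 : 0 <= K9 by rewrite /K9; lra.
have c0 : 0 <= 1 + d^-1 by rewrite addr_ge0 // invr_ge0 ltW.
have triv : forall Y : 'M[C]_m.+1, `|S (phi Y) - S (phi Y)| <= d * S (phi Y) + (1 + d^-1).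
  by move=> Y; rewrite subrr normr0 addr_ge0 // mulr_ge0 ?S_ge0 // ltW.
split.
- have [hc hr] := case1 h1.
  exact: (core m0 K0 (ltW d0) c0 e0 hc hr (triv b1) he).
- have [hc hr] := case2 h1 h2 h3.
  apply: (core m0 K0 (ltW d0) c0 e0 hc hr _ he).
  rewrite phi_mul; apply: le_trans (S_diff _ _ d0) _.
  rewrite lerD2l; rewrite -[X in _ <= X]mulr1; apply: ler_wpM2l => //.
  exact: SE_le.
- have [hc hr] := case3 h1 h2 h3 hy hz.
  by rewrite -phi_lin; exact: (core m0 K0 (ltW d0) c0 e0 hc hr (triv _) he).
- have [hc hr] := case4 h1 h2.
  by rewrite -phi_adj; exact: (core m0 K0 (ltW d0) c0 e0 hc hr (triv _) he).
Qed.


Definition strat m : dup_strategy R m m.+1 :=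
  @DupStrategy R m m.+1 (fun _ x => psi x) (fun _ x => phi x).

Lemma contr0 k : contraction (0 : 'M[C]_k).
Proof.
apply: contrI => v _; rewrite mul0mx /sq big1 ?ler01 // => i _.
by rewrite mxE /n2 /= expr0n /= addr0.
Qed.

Definition Pinv m (pr : 'M[C]_m * 'M[C]_m.+1) := pr.1 = phi pr.2 /\ contraction pr.2.

Lemma play_inv m (cs : seq ('M[C]_m + 'M[C]_m.+1)) h :
  (forall c, c \in cs -> chal_move_legal c) ->
  (forall i, Pinv (nth (0,0) h i)) ->
  forall i, Pinv (nth (0,0) (foldl (inning (strat m)) h cs) i).
Proof.
elim: cs h => [|c cs IH] h hcs hh //=.
apply: IH => [c' hc'|i]; first by apply: hcs; rewrite in_cons hc' orbT.
have hc : chal_move_legal c by apply: hcs; rewrite in_cons eqxx.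
clear hcs; case: c hc => x hx /=; rewrite nth_rcons;
  (case: ifP => _; first exact: hh); case: ifP => _.
- by rewrite /Pinv /= phi_psi; split => //; apply: psi_contr.
- by split; [apply/matrixP => p q; rewrite !mxE | apply: contr0].
- by rewrite /Pinv /=.
- by split; [apply/matrixP => p q; rewrite !mxE | apply: contr0].
Qed.

End Proof.

Theorem lemma5 (R : realType) (n : nat) (eps : R) :
  (1 <= n)%N -> 0 < eps ->
  exists M : nat, forall m : nat, (M <= m)%N ->
    dup_has_winning_strategy m m.+1 n eps.
Proof.
move=> _ eps0.
set d : R := eps ^+ 2 / 36.
have d0 : 0 < d by rewrite /d divr_gt0 // exprn_gt0.
set B : R := 2 * ((1 + d^-1) + 3 * K9 R) / eps ^+ 2.
have B0 : 0 <= B by rewrite /B /K9 divr_ge0 ?sqr_ge0 // mulr_ge0 // addr_ge0 ?addr_ge0 ?invr_ge0 ?ltW //; lra.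
exists (Num.Def.archi_bound B).+1 => m hm.
have m0 : (0 < m)%N by apply: leq_trans hm.
have mB : B < m%:R.
  apply: lt_le_trans (archi_boundP B0) _; rewrite ler_nat; exact: ltnW.
have mpos : 0 < m%:R :> R by rewrite ltr0n.
have he : 2 * d * K9 R + ((1 + d^-1) + 3 * K9 R) / m%:R <= eps ^+ 2.
  have e2 : 0 < eps ^+ 2 by rewrite exprn_gt0.
  have h1 : ((1 + d^-1) + 3 * K9 R) / m%:R <= eps ^+ 2 / 2.
    rewrite ler_pdivrMr //.
    move: mB; rewrite /B ltr_pdivrMr // => h; lra.
  have h2 : 2 * d * K9 R = eps ^+ 2 / 2 by rewrite /d /K9; field.
  lra.
exists (strat R m); split.
  by split => h x hx /=; [apply: psi_contr | apply: phi_contr].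
move=> cs _ hcs /=.
have inv0 : forall i, Pinv (nth (0,0) ([::] : seq ('M[R[i]]_m * 'M[R[i]]_m.+1)) i).
  by move=> i; rewrite nth_nil; split; [apply/matrixP => p q; rewrite !mxE | apply: contr0].
have inv := play_inv hcs inv0.
move=> i j k _ _ _ y z.
rewrite ge_max => /andP [hy hz].
rewrite /play.
have [ei ci] := inv i; have [ej cj] := inv j; have [ek ck] := inv k.
rewrite ei ej ek.
by apply: (all4 (d := d)) => //; [apply: n2_le1 | apply: n2_le1 | apply: ltW].
Qed.
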